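(* Let $U\in\mathcal U_n$ and let $U'\in\mathcal U_{n+1}$ be obtained from $U$ by adding an $(n+1)$-st unit interval $I_{n+1}$ to the right of the intervals of $U$; let $\ell$ be the level of $n+1$ in $U'$. The area sequence of $p(U')$ is obtained from that of $p(U)$ by inserting one letter equal to $\ell$. Let $r$ be the number of occurrences of the letter $\ell$ in the area sequence of $p(U)$ plus the number of occurrences of the letter $\ell-1$ appearing after the position of this inserted letter $\ell$ in the area sequence of $p(U')$. Then $\zeta(p(U'))$ is obtained from $\zeta(p(U))$ by adding a final peak in position $(n-r,n+1)$.
   Context: A unit interval order on $\{1,\dots,n\}$ is given by closed intervals $I_1,\dots,I_n$ of length $1$, numbered from left to right, with $i\prec j$ iff $I_i$ lies strictly to the left of $I_j$; $\mathcal U_n$ is the set of these; adding $I_{n+1}$ to the right means $I_1,\dots,I_{n+1}$ remain numbered from left to right. Levels in $U'$: $\ell(1)=0$, and $\ell(j)=\max_{i\prec j}\ell(i)+1$ (or $0$ if no $i\prec j$). A Dyck path of length $n$ is a lattice path from $(0,0)$ to $(n,n)$ with up steps $a$ and right steps $b$ never going below $y=x$; its area sequence lists row by row from bottom to top the number of unit boxes between path and diagonal. For a nonnegative integer sequence $w$, $P(w)$ is the poset on $\{1,\dots,n\}$ with $i\prec j$ iff $w_j-w_i\ge 2$, or $w_j-w_i=1$ and $i<j$. For each $U\in\mathcal U_n$ there is a unique $w$ that is the area sequence of a Dyck path with $P(w)\cong U$; $p(U)$ is the Dyck path with area sequence $w$. The zeta map: label the top endpoint of each up step of $D$ by $a$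 and the right endpoint of each right step by $b$; read the labels along $y=x$ from bottom-left to top-right, then along $y=x+1$, then $y=x+2$, etc.; reading $b$ as an up step and $a$ as a right step gives $\zeta(D)$. Adding a final peak in position $(i,n+1)$ to a Dyck path $D$ of length $n$ means: $D$ passes through $(i,n)$, and the new path of length $n+1$ follows $D$ up to $(i,n)$, then takes an up step to $(i,n+1)$, then right steps to $(n+1,n+1)$. *)

(* Defs.v *)
From mathcomp Require Import all_boot all_order all_algebra.
From mathcomp Require Export reals.
Set Implicit Arguments. Unset Strict Implicit. Unset Printing Implicit Defensive.

(* Lattice paths are words over bool: true = up step a, false = right step b. *)

Definition dyck (n : nat) (D : seq bool) : bool :=
  [&& size D == 2 * n, count id D == n &
      all (fun k => count (fun b => ~~ b) (take k D) <= count id (take k D))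
          (iota 0 (size D).+1)].

(* Area sequence: for the up step at position k (the i-th up step, rows bottom
   to top) with x right steps before it, the area in that row is i - x. *)
Definition area (D : seq bool) : seq nat :=
  [seq count id (take k D) - count (fun b => ~~ b) (take k D)
  | k <- iota 0 (size D) & nth false D k].

Definition Prel (w : seq nat) (i j : nat) : bool :=
  (nth 0 w i + 2 <= nth 0 w j) || ((nth 0 w i).+1 == nth 0 w j) && (i < j).

Definition rel_iso (n : nat) (P Q : nat -> nat -> bool) : Prop :=
  exists f : 'I_n -> 'I_n, bijective f /\
    forall i j : 'I_n, P i j = Q (f i) (f j).

Definition step_diag (D : seq bool) (k : nat) : nat :=
  count id (take k.+1 D) - count (fun b => ~~ b) (take k.+1 D).

(* zeta map: read labels diagonal by diagonal (y = x, y = x+1, ...), each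
   diagonal from bottom-left to top-right (= path order); label a (up step)
   becomes a right step, label b (right step) becomes an up step. *)
Definition zeta (n : nat) (D : seq bool) : seq bool :=
  flatten [seq [seq ~~ nth false D k | k <- iota 0 (size D) & step_diag D k == d]
          | d <- iota 0 n.+1].

Definition passes_through (D : seq bool) (i m : nat) : Prop :=
  exists2 t, t <= size D &
    count id (take t D) = m /\ count (fun b => ~~ b) (take t D) = i.

(* Adding a final peak in position (i, n+1) to a Dyck path D of length n:
   follow D up to (i, n) (its first n + i steps), then one up step,
   then right steps to (n+1, n+1). *)
Definition add_final_peak (n : nat) (D : seq bool) (i : nat) : seq bool :=
  take (n + i) D ++ true :: nseq (n.+1 - i) false.

Definition insert_at (k : nat) (a : nat) (s : seq nat) : seq nat :=
  take k s ++ a :: drop k s.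

(* Main.v *)
Require Import Defs.
From mathcomp Require Import all_boot all_order all_algebra.
From mathcomp Require Import reals.
From mathcomp Require Import zify.
Import Order.TTheory GRing.Theory Num.Theory.
Set Implicit Arguments. Unset Strict Implicit. Unset Printing Implicit Defensive.
Definition ht (s : seq bool) := count id s - count (fun b => ~~ b) s.
Definition pok (s : seq bool) :=
  forall k, count (fun b => ~~ b) (take k s) <= count id (take k s).
Definition Lz d (s : seq bool) :=
  [seq ~~ nth false s k | k <- iota 0 (size s) & step_diag s k == d].
Definition B d (w : seq nat) := [seq (v == d) | v <- w & (v == d) || (v.+1 == d)].
Definition Z m w := flatten [seq B d w | d <- iota 0 m.+1].
Definition V (w : seq nat) := nth 0 w 0 = 0 /\ forall i, nth 0 w i.+1 <= (nth 0 w i).+1.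

Lemma take_rcons_le (s : seq bool) b k : k <= size s -> take k (rcons s b) = take k s.
Proof. by move=> hk; rewrite -cats1 takel_cat. Qed.

Lemma pok_rcons s b : pok (rcons s b) -> pok s.
Proof.
move=> H k; case: (leqP k (size s)) => hk.
  by have := H k; rewrite take_rcons_le.
rewrite take_oversize ?(ltnW hk) //.
by have := H (size s); rewrite take_rcons_le // take_size.
Qed.

Lemma step_diag_rcons s b k : k < size s -> step_diag (rcons s b) k = step_diag s k.
Proof. by move=> hk; rewrite /step_diag take_rcons_le. Qed.

Lemma step_diag_last s b : step_diag (rcons s b) (size s) = ht (rcons s b).
Proof. by rewrite /step_diag take_oversize // size_rcons. Qed.

Lemma Lz_rcons s b d :
  Lz d (rcons s b) = Lz d s ++ (if ht (rcons s b) == d then [:: ~~ b] else [::]).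
Proof.
rewrite /Lz size_rcons -addn1 iotaD add0n /= filter_cat map_cat /=.
rewrite step_diag_last; congr (_ ++ _); last first.
  by case: ifP => //= _; rewrite nth_rcons ltnn eqxx.
rewrite (@eq_in_filter _ _ (fun k => step_diag s k == d)); last first.
  by move=> k; rewrite mem_iota => /andP[_ hk]; rewrite step_diag_rcons.
apply/eq_in_map => k; rewrite mem_filter mem_iota => /andP[_ /andP[_ hk]].
by rewrite nth_rcons hk.
Qed.

Lemma area_rcons s b :
  area (rcons s b) = area s ++ (if b then [:: ht s] else [::]).
Proof.
rewrite /area size_rcons -addn1 iotaD add0n /= filter_cat map_cat /=.
congr (_ ++ _); last first.
  rewrite nth_rcons ltnn eqxx; case: b => //=.
  by rewrite -cats1 take_cat ltnn subnn take0 cats0.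
rewrite (@eq_in_filter _ _ (fun k => nth false s k)); last first.
  by move=> k; rewrite mem_iota => /andP[_ hk]; rewrite nth_rcons hk.
apply/eq_in_map => k; rewrite mem_filter mem_iota => /andP[_ /andP[_ hk]].
by rewrite take_rcons_le // ltnW.
Qed.

Lemma count_rcons_b (P : pred bool) s b : count P (rcons s b) = count P s + P b.
Proof. by rewrite -cats1 count_cat /= addn0. Qed.

Lemma pok_full s : pok s -> count (fun b => ~~ b) s <= count id s.
Proof. by move=> H; have := H (size s); rewrite take_size. Qed.

Lemma aux1 (h d : nat) : (if d < h then [:: true] else [::]) ++ [seq v == d | v <- [:: h] & (v == d) || (v.+1 == d)] = (if h.+1 == d then [:: false] else [::]) ++ (if d < h.+1 then [:: true] else [::]).
Proof.
rewrite /=; case: (ltngtP d h) => [hd|hd|->].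
- have -> : (h.+1 == d) = false by apply/negbTE; lia.
  by rewrite ifT //; lia.
- have -> : (d < h.+1) = false by apply/negbTE; lia.
  case: eqP => //= <-; by rewrite (_ : (h == h.+1) = false) //; apply/negbTE; lia.
- have -> : (h.+1 == h) = false by apply/negbTE; lia.
  by rewrite ltnSn /= eqxx.
Qed.
Lemma aux0 (h d : nat) : 0 < h -> (if d < h then [:: true] else [::]) = (if h.-1 == d then [:: true] else [::]) ++ (if d < h.-1 then [:: true] else [::]).
Proof.
move=> hp; case: (ltngtP d h.-1) => [hd|hd|->].
- by rewrite ifT //; lia.
- by rewrite ifF //; apply/negbTE; lia.
- by rewrite ifT //; lia.
Qed.

Lemma inv_BL s : pok s -> forall d,
  B d (area s) = Lz d s ++ (if d < ht s then [:: true] else [::]).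
Proof.
elim/last_ind: s => [|s b IH] H d; first by rewrite /B /area /Lz /ht.
have Hs := pok_rcons H.
rewrite area_rcons Lz_rcons /B filter_cat map_cat -/(B d (area s)) IH // -!catA.
congr (_ ++ _).
have h1 := pok_full Hs.
have h2 := pok_full H.
move: h2; rewrite /ht !count_rcons_b.
case: b H => H /= h2.
  rewrite addn0 addn1 in h2 *.
  have -> : (count id s).+1 - count (fun b => ~~ b) s = (count id s - count (fun b => ~~ b) s).+1 by lia.
  exact: aux1.
rewrite addn0 addn1 in h2 *.
rewrite cats0.
have -> : count id s - (count (fun b => ~~ b) s).+1 = (count id s - count (fun b => ~~ b) s).-1 by lia.
apply: aux0; lia.
Qed.

Lemma V_rcons w a : V w -> (w = [::] -> a = 0) -> a <= (last 0 w).+1 -> V (rcons w a).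
Proof.
case=> h0 hs h1 h2; split.
  case: w h0 hs h1 h2 => [|y w] //= _ _ -> //.
move=> i; rewrite !nth_rcons.
case: (ltngtP i.+1 (size w)) => hi.
- exact: hs.
- by [].
- case: w hi h0 hs h1 h2 => [|y w] //= [hi] _ _ _.
  by rewrite hi (last_nth 0).
Qed.

Lemma area_props s : pok s ->
  [/\ V (area s), size (area s) = count id s,
      (area s = [::] -> ht s = 0) & ht s <= (last 0 (area s)).+1].
Proof.
elim/last_ind: s => [|s b IH] H; first by rewrite /area /ht /=; split => // i /=; rewrite nth_nil.
have Hs := pok_rcons H.
have [IV IS IE IL] := IH Hs.
have h1 := pok_full Hs.
have h2 := pok_full H.
move: h2; rewrite area_rcons /ht !count_rcons_b.
case: b H => H /= h2.
  rewrite cats1; split.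
  - apply: V_rcons => //.
  - by rewrite size_rcons IS addn1.
  - by case: (area s).
  - rewrite last_rcons; lia.
rewrite cats0; split => //.
- by rewrite IS addn0.
- move=> /IE; rewrite /ht; lia.
- move: IL; rewrite /ht; lia.
Qed.

Lemma dyck_pok n D : dyck n D ->
  [/\ pok D, count id D = n, ht D = 0 & size D = 2 * n].
Proof.
case/and3P => /eqP hs /eqP hc /allP ha.
have hp : pok D.
  move=> k; case: (leqP k (size D)) => hk.
    by apply: (ha k); rewrite mem_iota.
  rewrite take_oversize ?(ltnW hk) //.
  have := ha (size D); rewrite mem_iota take_size; apply; lia.
split => //.
rewrite /ht.
have := count_predC id D; rewrite hs hc.
have -> : count (predC id) D = count (fun b => ~~ b) D by [].
lia.
Qed.

Lemma zeta_Z n D : dyck n D ->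
  [/\ zeta n D = Z n (area D), V (area D) & size (area D) = n].
Proof.
move=> hd; have [hp hc hh hs] := dyck_pok hd.
have [AV AS _ _] := area_props hp.
split => //; last by rewrite AS.
rewrite /zeta /Z; congr flatten; apply: eq_map => d.
by rewrite inv_BL // hh cats0.
Qed.

Lemma V_le w : V w -> forall i, nth 0 w i <= i.
Proof.
case=> h0 hs; elim=> [|i IH]; first by rewrite h0.
by apply: leq_trans (hs i) _; rewrite ltnS.
Qed.

Lemma count_add (P Q R : pred nat) s :
  (forall v, P v + Q v = R v) -> count P s + count Q s = count R s.
Proof.
move=> H; elim: s => [|v s IH] //=.
by rewrite -IH -H; lia.
Qed.

Lemma B_cons d v s : B d (v :: s) =
  (if (v == d) || (v.+1 == d) then [:: v == d] else [::]) ++ B d s.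
Proof. by rewrite /B /=; case: ifP. Qed.

Lemma B_cat d s1 s2 : B d (s1 ++ s2) = B d s1 ++ B d s2.
Proof. by rewrite /B filter_cat map_cat. Qed.

Lemma count_B_id d s : count id (B d s) = count (fun v => v == d) s.
Proof.
elim: s => [|v s IH] //; rewrite B_cons count_cat IH /=.
by case: (eqVneq v d) => //= _; case: ifP.
Qed.

Lemma count_B_neg d s : count (fun b => ~~ b) (B d s) = count (fun v => v.+1 == d) s.
Proof.
elim: s => [|v s IH] //; rewrite B_cons count_cat IH /=.
case: (eqVneq v d) => [->|hne] /=.
  by rewrite (_ : (d.+1 == d) = false) //; apply/negbTE; lia.
by case: ifP.
Qed.

Lemma Z_S m w : Z m.+1 w = Z m w ++ B m.+1 w.
Proof.
by rewrite /Z -addn1 iotaD add0n /= map_cat flatten_cat /= cats0 catA.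
Qed.

Lemma B_nil d s : (forall v, v \in s -> (v != d) && (v.+1 != d)) -> B d s = [::].
Proof.
elim: s => [|v s IH] // H; rewrite B_cons IH; last by move=> u hu; apply: H; rewrite inE hu orbT.
by have /andP[/negbTE -> /negbTE ->] := H v (mem_head _ _).
Qed.

Lemma count_Z_id m w : count id (Z m w) = count (fun v => v <= m) w.
Proof.
elim: m => [|m IH].
  rewrite /Z /= cats0 count_B_id; apply: eq_count => v; by rewrite leqn0.
rewrite Z_S count_cat IH count_B_id; apply: count_add => v; lia.
Qed.

Lemma count_Z_neg m w : count (fun b => ~~ b) (Z m w) = count (fun v => v < m) w.
Proof.
elim: m => [|m IH].
  rewrite /Z /= cats0 count_B_neg; apply: eq_count => v //.
rewrite Z_S count_cat IH count_B_neg; apply: count_add => v; lia.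
Qed.

Lemma Z_split N s l : l < N -> (forall v, v \in s -> v <= l) ->
  Z N s = flatten [seq B d s | d <- iota 0 l] ++ B l s ++ B l.+1 s.
Proof.
move=> hl hs; rewrite /Z.
have -> : iota 0 N.+1 = iota 0 l ++ [:: l; l.+1] ++ iota l.+2 (N - l.+1).
  rewrite -[X in iota 0 X](_ : l + (2 + (N - l.+1)) = N.+1); last lia.
  by rewrite iotaD add0n iotaD /= addn2.
rewrite !map_cat !flatten_cat /=.
rewrite (_ : flatten [seq B d s | d <- iota l.+2 (N - l.+1)] = [::]).
  by rewrite !cats0.
apply/eqP; rewrite -size_eq0 size_flatten.
rewrite /shape -map_comp sumnE big_map big1_seq //= => d.
rewrite mem_iota => /andP[hd _].
rewrite B_nil //= => v /hs hv; apply/andP; split; apply/eqP; lia.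
Qed.

Lemma B_top l s : (forall v, v \in s -> v <= l) -> B l.+1 s = nseq (count_mem l s) false.
Proof.
elim: s => [|v s IH] H //; rewrite B_cons IH /=; last by move=> u hu; apply: H; rewrite inE hu orbT.
have := H v (mem_head _ _) => hv.
case: (eqVneq v l) => [->|hne] /=.
  by rewrite eqxx orbT /= (_ : l == l.+1 = false) //; apply/negbTE; lia.
by rewrite ifF //; apply/negbTE; lia.
Qed.

Lemma B_noL l s : l \notin s -> B l s = nseq (count (fun a => a.+1 == l) s) false.
Proof.
elim: s => [|v s IH] //; rewrite inE negb_or => /andP[hv hs].
rewrite B_cons IH //= eq_sym (negbTE hv) /=.
by case: ifP.
Qed.

Lemma B_nseq l j : B l (nseq j l) = nseq j true.
Proof. by elim: j => [|j IH] //; rewrite /= B_cons IH eqxx. Qed.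

Lemma nseqSr j (x : bool) : nseq j.+1 x = nseq j x ++ [:: x].
Proof. by elim: j => [|j IH] //=; rewrite -IH. Qed.

Lemma take_find_l (l : nat) s :
  take (find (fun v => v != l) s) s = nseq (find (fun v => v != l) s) l.
Proof.
elim: s => [|v s IH] //=.
by case: (eqVneq v l) => [->|] //=; rewrite IH.
Qed.

Lemma count_size_all (P : pred nat) s : (forall v, v \in s -> P v) -> count P s = size s.
Proof. by move=> H; rewrite -[RHS]count_predT; apply: eq_in_count => v /H. Qed.

Lemma cons_nseq (x : bool) j s : x :: nseq j x ++ s = nseq j x ++ x :: s.
Proof. by elim: j => [|j IH] //=; rewrite IH. Qed.

Lemma Z_main n w k l :
  size w = n -> V w -> (forall v, v \in w -> v <= l) -> l <= n -> k <= n ->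
  (forall p, k <= p < n.+1 -> nth 0 (insert_at k l w) p = l ->
       forall q, k <= q <= p -> nth 0 (insert_at k l w) q = l) ->
  let r := count_mem l w + count (fun a => a.+1 == l) (drop k.+1 (insert_at k l w)) in
  [/\ r <= n, passes_through (Z n w) (n - r) n &
      Z n.+1 (insert_at k l w) = add_final_peak n (Z n w) (n - r)].
Proof.
move=> hs hV hl hln hk hrun r.
set w' := insert_at k l w in hrun r *.
set A := take k w; set Bs := drop k w.
have hw : w = A ++ Bs by rewrite cat_take_drop.
have hA : size A = k by rewrite size_take hs; case: ltngtP hk => //; lia.
have hw' : w' = A ++ l :: Bs by [].
have hsB : size Bs = n - k by rewrite size_drop hs.
have hdr : drop k.+1 w' = Bs.
  by rewrite hw' drop_cat hA ltnNge leqnSn /= subSnn /= drop0.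
set j := find (fun v => v != l) Bs.
set C := drop j Bs.
have hBs : Bs = nseq j l ++ C by rewrite -take_find_l cat_take_drop.
have hjB : j <= size Bs by apply: find_size.
have hC : l \notin C.
  apply/negP => hlC.
  case hCe : C => [|c0 C']; first by rewrite hCe in hlC.
  have hc0 : c0 != l.
    have : has (fun v => v != l) Bs.
      by rewrite has_find -/j ltn_neqAle hjB andbT; apply/eqP => hj;
         move: hCe; rewrite /C hj drop_size.
    move/(nth_find 0); rewrite -/j.
    by rewrite (_ : nth 0 Bs j = c0) // -[j]addn0 -nth_drop -/C hCe.
  have hlC' : l \in C' by move: hlC; rewrite hCe inE eq_sym (negbTE hc0).
  set t := index l C'.
  have ht : t < size C' by rewrite index_mem.
  have hsC : size C = size Bs - j by rewrite size_drop.
  have hnthw' : forall m, nth 0 w' (k.+1 + (j + m)) = nth 0 C m.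
    move=> m; rewrite hw' nth_cat hA ltnNge (_ : k <= k.+1 + (j + m)); last lia.
    rewrite /= (_ : k.+1 + (j + m) - k = (j + m).+1); last lia.
    by rewrite /= /C nth_drop.
  have hsC' : size C = (size C').+1 by rewrite hCe.
  have H1 : k <= k.+1 + (j + t.+1) < n.+1.
    apply/andP; split; first lia.
    move: hsC hsC' hsB hjB ht; lia.
  have H2 : nth 0 w' (k.+1 + (j + t.+1)) = l by rewrite hnthw' hCe /= nth_index.
  have H3 := hrun _ H1 H2 (k.+1 + (j + 0)).
  move: H3; rewrite hnthw' hCe /= => H3.
  by move: hc0; rewrite H3 ?eqxx //; apply/andP; split; lia.
have hl' : forall v, v \in w' -> v <= l.
  move=> v; rewrite hw' mem_cat inE => /or3P[hv|/eqP->|hv] //; apply: hl.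
    by rewrite hw mem_cat hv.
  by rewrite hw mem_cat hv orbT.
have hwn : forall v, v \in w -> v < n.
  move=> v /(nthP 0) [i hi <-]; apply: leq_ltn_trans (V_le hV i) _; by rewrite -hs.
have hZw : Z n w = Z n.+1 w.
  rewrite Z_S B_nil ?cats0 // => v /hwn hv; apply/andP; split; apply/eqP; lia.
have hlt : l < n.+1 by lia.
set c := count (fun a => a.+1 == l) C.
set cl := count_mem l w.
have hBl : forall s, B l (s ++ Bs) = B l s ++ nseq j true ++ nseq c false.
  by move=> s; rewrite B_cat hBs B_cat B_nseq (B_noL hC).
have hpre : flatten [seq B d w' | d <- iota 0 l] = flatten [seq B d w | d <- iota 0 l].
  congr flatten; apply/eq_in_map => d; rewrite mem_iota => /andP[_ hd].
  rewrite hw' hw !B_cat B_cons ifF //; apply/negbTE; lia.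
set P := flatten [seq B d w | d <- iota 0 l].
set X := P ++ B l A ++ nseq j true.
have hr : r = c + cl.
  by rewrite addnC /r hdr hBs count_cat count_nseq /= (_ : (l.+1 == l) = false) //; apply/negbTE; lia.
have E1 : Z n w = X ++ nseq r false.
  by rewrite hZw (Z_split hlt hl) -/P B_top // -/cl {1}hw hBl /X hr nseqD -!catA.
have E2 : Z n.+1 w' = X ++ true :: nseq r.+1 false.
  rewrite (Z_split hlt hl') hpre -/P B_top // {1}hw' (_ : l :: Bs = [:: l] ++ Bs) //.
  rewrite [A ++ _]catA hBl B_cat B_cons eqxx /= -/(B l [::]).
  have -> : count_mem l w' = cl.+1.
    by rewrite /cl hw' hw !count_cat /= eqxx; lia.
  rewrite /X hr -!catA; congr (_ ++ _); congr (_ ++ _).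
  rewrite /B /= cons_nseq; congr (_ ++ _ :: _).
  by rewrite -[false :: nseq cl false]/(nseq cl.+1 false) -nseqD addnS.
have hcnt : count id (Z n w) = n.
  rewrite count_Z_id count_size_all // => v /hwn; lia.
have hcnn : count (fun b => ~~ b) (Z n w) = n.
  rewrite count_Z_neg count_size_all // => v /hwn; lia.
move: hcnt hcnn; rewrite E1 !(count_cat _ X) !count_nseq /= mul0n addn0 mul1n => hX1 hX2.
have hsX : size X = count id X + count (fun b => ~~ b) X.
  by rewrite -(count_predC id X).
split.
- lia.
- exists (size X); first by rewrite size_cat; lia.
  by rewrite take_size_cat //; split; lia.
- rewrite E2 /add_final_peak take_size_cat; last lia.
  by congr (_ ++ _ :: _); congr nseq; lia.
Qed.

Lemma IVT w : (forall i, nth 0 w i.+1 <= (nth 0 w i).+1) ->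
  forall i p a, i <= p -> nth 0 w i <= a -> a < nth 0 w p ->
  exists2 j, i <= j < p & nth 0 w j = a.
Proof.
move=> hs i p a; elim: p => [|p IH] hip hi ha.
  by move: hip hi ha; rewrite leqn0 => /eqP ->; lia.
case: (leqP i p) => hip'; last first.
  have hi' : i = p.+1 by lia.
  by subst i; lia.
case: (ltnP a (nth 0 w p)) => hap.
  by have [j hj1 hj2] := IH hip' hi hap; exists j => //; lia.
exists p; first lia.
have := hs p; lia.
Qed.

Lemma grade_iso m (P Q : nat -> nat -> bool) (g1 g2 : nat -> nat) (h : 'I_m -> 'I_m) :
  bijective h -> (forall i j : 'I_m, P i j = Q (h i) (h j)) ->
  (forall i j : 'I_m, P i j -> g1 i < g1 j) ->
  (forall j : 'I_m, 0 < g1 j -> exists i : 'I_m, P i j /\ (g1 i).+1 = g1 j) ->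
  (forall i j : 'I_m, Q i j -> g2 i < g2 j) ->
  (forall j : 'I_m, 0 < g2 j -> exists i : 'I_m, Q i j /\ (g2 i).+1 = g2 j) ->
  forall j : 'I_m, g1 j = g2 (h j).
Proof.
case=> hi hK Kh hPQ a1 b1 a2 b2.
suff H : forall v (j : 'I_m), g1 j <= v -> g1 j = g2 (h j) by move=> j; exact: H.
elim=> [|v IH] j hj.
  case: (posnP (g2 (h j))) => hz; first by move: hj; rewrite leqn0 hz => /eqP.
  have [i' [hq _]] := b2 _ hz.
  have := a1 (hi i') j; rewrite hPQ Kh => /(_ hq); lia.
apply/eqP; rewrite eqn_leq; apply/andP; split.
  case: (posnP (g1 j)) => hz; first by rewrite hz.
  have [i [hp he]] := b1 _ hz.
  have := IH i; rewrite -he in hj => /(_ hj) hie.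
  have hq : Q (h i) (h j) by rewrite -hPQ.
  have := a2 _ _ hq; rewrite -hie; lia.
case: (posnP (g2 (h j))) => hz; first by rewrite hz.
have [i' [hq he]] := b2 _ hz.
have hp : P (hi i') j by rewrite hPQ Kh.
have := a1 _ _ hp => hlt.
have := IH (hi i'); rewrite Kh => /(_ _) hie.
rewrite -he -hie; lia.
Qed.

Lemma count_take_sum (P : pred nat) w j :
  count P (take j w) = \sum_(i < size w) (P (nth 0 w i) && (i < j)).
Proof.
elim: w j => [|v w IH] j; first by rewrite big_ord0.
case: j => [|j].
  by rewrite take0 /= big1 // => i _; rewrite ltn0 andbF.
rewrite [take _ _]/= [count _ _]/= big_ord_recl IH andbT; congr (_ + _).
Qed.

Lemma count_ord (P : pred nat) w : count P w = \sum_(i < size w) P (nth 0 w i).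
Proof.
rewrite -(take_size w) count_take_sum take_size; apply: eq_bigr => i _.
by rewrite ltn_ord andbT.
Qed.

Lemma count_take_lt (P : pred nat) w i j s :
  i <= s < j -> s < size w -> P (nth 0 w s) -> count P (take i w) < count P (take j w).
Proof.
elim: w i j s => [|v w IH] i j s //= /andP[his hsj] hs hP.
case: j hsj => [|j] // hsj /=.
case: i his => [|i] his /=.
  case: s hs hP his hsj => [|s] hs hP _ hsj; first by rewrite hP.
  have := IH 0 j s; rewrite take0 /= => /(_ _ hs hP); lia.
case: s hs hP his hsj => [|s] // hs hP his hsj.
have := IH i j s; rewrite -ltnS his -ltnS hsj => /(_ erefl hs hP); lia.
Qed.

Lemma Prel_lt w i j : Prel w i j -> nth 0 w i < nth 0 w j.
Proof. rewrite /Prel => /orP[|/andP[/eqP <- _]] //; lia. Qed.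

Lemma Prel_ex m w : size w = m -> V w ->
  forall j : 'I_m, 0 < nth 0 w j -> exists i : 'I_m, Prel w i j /\ (nth 0 w i).+1 = nth 0 w j.
Proof.
move=> hs [h0 hV] j hj.
have [i /andP[_ hij] hi] : exists2 k, 0 <= k < j & nth 0 w k = (nth 0 w j).-1.
  by apply: (@IVT w hV 0 j (nth 0 w j).-1 (leq0n _)); [rewrite h0 | lia].
have him : i < m by apply: ltn_trans hij (ltn_ord j).
exists (Ordinal him) => /=; split; last lia.
by rewrite /Prel hi (_ : (nth 0 w j).-1.+1 = nth 0 w j) ?eqxx ?hij ?orbT //; lia.
Qed.

Definition pi (w : seq nat) j :=
  count (fun v => v.+2 <= nth 0 w j) w + count (fun v => v.+1 == nth 0 w j) (take j w).

Lemma pi_sum w j : \sum_(i < size w) (Prel w i j : nat) = pi w j.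
Proof.
rewrite /pi count_ord count_take_sum -big_split /=; apply: eq_bigr => i _.
rewrite /Prel addn2; case: (leqP (nth 0 w i).+2 (nth 0 w j)) => h /=.
  by rewrite (_ : (nth 0 w i).+1 == nth 0 w j = false) //; apply/negbTE; lia.
by case: (_ == _).
Qed.

Definition Acnt (w : seq nat) v c :=
  \sum_(0 <= j < size w) ((nth 0 w j == v) && (pi w j <= c)).

Lemma core w1 w2 m i : size w1 = m -> size w2 = m -> V w1 ->
  (forall P, count P w1 = count P w2) -> (forall v c, Acnt w1 v c = Acnt w2 v c) ->
  i < m -> (forall p, p < i -> nth 0 w1 p = nth 0 w2 p) ->
  nth 0 w1 i < nth 0 w2 i -> False.
Proof.
move=> hs1 hs2 [_ hV] hc hA him hpre hlt.
set u := nth 0 w2 i.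
set c0 := pi w2 i.
have htk : forall j, j <= i -> take j w1 = take j w2.
  move=> j hj; apply: (@eq_from_nth _ 0); first by rewrite !size_take hs1 hs2.
  move=> t; rewrite size_take hs1 => ht.
  have htj : t < j by move: ht; rewrite ifT //; lia.
  rewrite !nth_take //; apply: hpre; lia.
have := hA u c0; rewrite /Acnt hs1 hs2.
rewrite (@big_cat_nat _ _ _ i 0 m) //= ?(ltnW him) // (big_ltn him).
rewrite [in RHS](@big_cat_nat _ _ _ i 0 m) //= ?(ltnW him) // (big_ltn him).
rewrite (_ : (nth 0 w1 i == u) = false); last by apply/negbTE; rewrite /u; lia.
rewrite eqxx leqnn /= add0n.
have E : \sum_(0 <= j < i) ((nth 0 w1 j == u) && (pi w1 j <= c0)) =
    \sum_(0 <= j < i) ((nth 0 w2 j == u) && (pi w2 j <= c0)).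
  apply: eq_big_nat => j /andP[_ hj]; rewrite hpre //; congr (_ && (_ <= _)).
  rewrite /pi hpre // htk ?(ltnW hj) //; congr (_ + _).
  by rewrite hc.
have Z1 : \sum_(i.+1 <= j < m) ((nth 0 w1 j == u) && (pi w1 j <= c0)) = 0.
  rewrite big_nat_cond big1 // => j /andP[/andP[hij hjm] _].
  case: (eqVneq (nth 0 w1 j) u) => //= hju.
  suff -> : (pi w1 j <= c0) = false by [].
  apply/negbTE; rewrite -ltnNge.
  rewrite /c0 /pi hju -/u -htk // -(hc (fun v => v.+2 <= u)).
  rewrite ltn_add2l.
  have hu0 : 0 < u by lia.
  have [s /andP[his hsj] hsv] : exists2 s, i <= s < j & nth 0 w1 s = u.-1.
    by apply: (@IVT w1 hV i j u.-1 (ltnW hij)); lia.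
  apply: (@count_take_lt _ w1 i j s); first by rewrite his.
    by rewrite hs1; lia.
  by rewrite hsv; apply/eqP; lia.
rewrite E Z1; lia.
Qed.

Lemma area_unique m w1 w2 (h : 'I_m -> 'I_m) :
  size w1 = m -> size w2 = m -> V w1 -> V w2 -> bijective h ->
  (forall i j : 'I_m, Prel w1 i j = Prel w2 (h i) (h j)) -> w1 = w2.
Proof.
move=> hs1 hs2 hV1 hV2 hb hP.
have hinj := bij_inj hb.
have lv : forall j : 'I_m, nth 0 w1 j = nth 0 w2 (h j).
  apply: (@grade_iso m (Prel w1) (Prel w2) (nth 0 w1) (nth 0 w2) h hb hP).
  - by move=> i j; apply: Prel_lt.
  - exact: Prel_ex hs1 hV1.
  - by move=> i j; apply: Prel_lt.
  - exact: Prel_ex hs2 hV2.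
have hc : forall P, count P w1 = count P w2.
  move=> P; rewrite !count_ord hs1 hs2 [RHS](reindex_inj hinj) /=.
  by apply: eq_bigr => j _; rewrite lv.
have hpi : forall j : 'I_m, pi w1 j = pi w2 (h j).
  move=> j; rewrite -!pi_sum hs1 hs2 [RHS](reindex_inj hinj) /=.
  by apply: eq_bigr => i _; rewrite hP.
have hA : forall v c, Acnt w1 v c = Acnt w2 v c.
  move=> v c; rewrite /Acnt hs1 hs2 !big_mkord [RHS](reindex_inj hinj) /=.
  by apply: eq_bigr => j _; rewrite lv hpi.
apply: (@eq_from_nth _ 0); first by rewrite hs1 hs2.
move=> i; rewrite hs1; elim/ltn_ind: i => i IH him.
case: (ltngtP (nth 0 w1 i) (nth 0 w2 i)) => // hlt; exfalso.
  apply: (@core w1 w2 m i) => // p hp; apply: IH => //; lia.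
apply: (@core w2 w1 m i) => //; try (by move=> P; rewrite hc); try (by move=> v c; rewrite hA).
by move=> p hp; rewrite IH //; lia.
Qed.

Lemma xmono (R : realType) n (x : nat -> R) :
  (forall i, i < n -> (x i <= x i.+1)%R) -> forall i j, i <= j -> j <= n -> (x i <= x j)%R.
Proof.
move=> hx i j; elim: j => [|j IH] hij hjn.
  by move: hij; rewrite leqn0 => /eqP ->.
case: (eqVneq i j.+1) => [->|hne]; first exact: lexx.
apply: le_trans (IH _ _) (hx _ _); lia.
Qed.

Section Lev.
Variables (R : realType) (n : nat) (x : nat -> R) (lev : nat -> nat).
Hypothesis hlev : forall j, (j <= n)%N ->
     lev j = \max_(i < n.+1 | (x i + 1 < x j)%R) (lev i).+1.

Lemma lev_a : forall i j : 'I_n.+1, (x i + 1 < x j)%R -> lev i < lev j.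
Proof.
move=> i j hij; rewrite (hlev (ltn_ord j)).
exact: (leq_bigmax_cond (F := fun i : 'I_n.+1 => (lev i).+1) i hij).
Qed.

Lemma lev_b : forall j : 'I_n.+1, 0 < lev j ->
  exists i : 'I_n.+1, (x i + 1 < x j)%R /\ (lev i).+1 = lev j.
Proof.
move=> j hj.
case: (boolP [exists i : 'I_n.+1, (x i + 1 < x j)%R && ((lev i).+1 == lev j)]).
  by move=> /existsP [i /andP [h1 /eqP h2]]; exists i.
move=> hn; exfalso.
have : lev j <= (lev j).-1.
  rewrite {1}(hlev (ltn_ord j)); apply/bigmax_leqP => i hi.
  have := lev_a hi.
  have : (lev i).+1 != lev j.
    by apply: contra hn => he; apply/existsP; exists i; rewrite hi he.
  lia.
lia.
Qed.

Lemma lev_mono (hx : forall i, (i < n)%N -> (x i <= x i.+1)%R) :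
  forall j, j <= n -> lev j <= lev n.
Proof.
move=> j hj; rewrite (hlev hj) (hlev (leqnn n)).
apply/bigmax_leqP => i hi.
apply: (leq_bigmax_cond (F := fun i : 'I_n.+1 => (lev i).+1) i).
apply: (lt_le_trans hi); exact: (xmono hx hj (leqnn n)).
Qed.
End Lev.

Lemma nth_del (s : seq nat) e t :
  nth 0 (take e s ++ drop e.+1 s) t = nth 0 s (bump e t).
Proof.
case: (leqP e (size s)) => hes.
  have hst : size (take e s) = e by rewrite size_takel.
  rewrite nth_cat hst /bump; case: (ltnP t e) => hte.
    by rewrite nth_take // leqNgt hte.
  by rewrite nth_drop add1n; congr nth; lia.
rewrite take_oversize ?(ltnW hes) // drop_oversize ?cats0; last lia.
rewrite /bump; case: (leqP e t) => h //=.
by rewrite !nth_default //; lia.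
Qed.

Lemma bump_ltn e i j : (bump e i < bump e j) = (i < j).
Proof. rewrite /bump; case: (leqP e i); case: (leqP e j) => /= ? ?; lia. Qed.

Lemma ins_eq0 (a : nat) s e : a :: s = insert_at e a s -> e <= size s ->
  forall q, q <= e -> nth 0 (a :: s) q = a.
Proof.
elim: s e => [|y s IH] e.
  by case: e => //= _ _ q; rewrite leqn0 => /eqP ->.
case: e => [|e] /=; first by move=> _ _ q; rewrite leqn0 => /eqP ->.
rewrite /insert_at /= => -[<- hs] he [|q] //= hq.
by apply: IH hs he q hq.
Qed.

Lemma ins_eq (a : nat) s k e : insert_at k a s = insert_at e a s -> k <= e -> e <= size s ->
  forall q, k <= q <= e -> nth 0 (insert_at k a s) q = a.
Proof.
elim: k s e => [|k IH] s e.
  move=> h _ he q /andP[_ hq]; rewrite /insert_at take0 drop0 /=.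
  by apply: (@ins_eq0 a s e) => //; rewrite -h /insert_at take0 drop0.
case: s => [|y s]; first by case: e.
case: e => [|e] //= h hk he [|q] //= hq.
have h' : insert_at k a s = insert_at e a s by move: h; rewrite /insert_at /= => -[].
exact: IH h' hk he q hq.
Qed.

Theorem mainTheorem8 (R : realType) (n : nat) (x : nat -> R)
  (hx : forall i, (i < n)%N -> (x i <= x i.+1)%R)
  (lev : nat -> nat)
  (hlev : forall j, (j <= n)%N ->
     lev j = \max_(i < n.+1 | (x i + 1 < x j)%R) (lev i).+1)
  (D D' : seq bool) (hD : dyck n D) (hD' : dyck n.+1 D')
  (hU : rel_iso n (Prel (area D)) (fun i j => (x i + 1 < x j)%R))
  (hU' : rel_iso n.+1 (Prel (area D')) (fun i j => (x i + 1 < x j)%R)) :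
  let l := lev n in
  (exists2 k, (k <= n)%N & area D' = insert_at k l (area D)) /\
  forall k, (k <= n)%N -> area D' = insert_at k l (area D) ->
    let r := (count_mem l (area D) +
              count (fun a => a.+1 == l) (drop k.+1 (area D')))%N in
    [/\ (r <= n)%N, passes_through (zeta n D) (n - r) n &
        zeta n.+1 D' = add_final_peak n (zeta n D) (n - r)].
Proof.
move=> l.
have [zD VD sD] := zeta_Z hD.
have [zD' VD' sD'] := zeta_Z hD'.
rewrite zD zD'.
set w := area D in VD sD hU *.
set w' := area D' in VD' sD' hU' *.
case: hU => f [fb hf].
case: hU' => f' [fb' hf'].
have lvl : forall j : 'I_n.+1, nth 0 w' j = lev (f' j).
  apply: (@grade_iso n.+1 (Prel w') (fun i j => (x i + 1 < x j)%R) (nth 0 w') lev f' fb' hf').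
  - by move=> i j; apply: Prel_lt.
  - exact: Prel_ex sD' VD'.
  - exact: (lev_a hlev).
  - exact: (lev_b hlev).
have hmaxn : forall t, nth 0 w' t <= l.
  move=> t; case: (ltnP t n.+1) => ht.
    rewrite (lvl (Ordinal ht)); apply: (lev_mono hlev hx).
    by rewrite -ltnS ltn_ord.
  by rewrite nth_default // sD'.
have [e he] : exists e : 'I_n.+1, f' e = ord_max.
  by case: fb' => g gK Kg; exists (g ord_max); exact: Kg.
have hwe : nth 0 w' e = l by rewrite lvl he.
have hrun : forall p, e <= p < n.+1 -> nth 0 w' p = l ->
    forall q, e <= q <= p -> nth 0 w' q = l.
  move=> p /andP[hep hpn] hp q /andP[heq hqp].
  case: (eqVneq (nth 0 w' q) l) => // hne; exfalso.
  have hql : nth 0 w' q < l by have := hmaxn q; rewrite leq_eqVlt (negbTE hne).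
  have [s /andP[hqs hsp] hs] : exists2 s, q <= s < p & nth 0 w' s = l.-1.
    by apply: (@IVT w' VD'.2 q p l.-1 hqp); lia.
  have hsn : s < n.+1 by lia.
  have heq' : e < q.
    rewrite ltn_neqAle heq andbT; apply/eqP => hqe.
    by move: hne; rewrite -hqe hwe eqxx.
  have P1 : Prel w' (Ordinal hsn) (Ordinal hpn).
    rewrite /Prel /= hs hp; apply/orP; right; apply/andP; split; last lia.
    by apply/eqP; lia.
  rewrite hf' in P1.
  have P2 : (x (f' (Ordinal hsn)) + 1 < x (f' e))%R.
    rewrite he; apply: (lt_le_trans P1); apply: (xmono hx) => //.
    by rewrite -ltnS ltn_ord.
  have := hf' (Ordinal hsn) e; rewrite P2 /Prel /= hs hwe => /orP[|/andP[_]].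
    lia.
  lia.
set w'' := take e w' ++ drop e.+1 w'.
have hen : e <= n by rewrite -ltnS ltn_ord.
have hins : w' = insert_at e l w''.
  have hst : size (take e w') = e by rewrite size_takel // sD'; lia.
  rewrite /insert_at /w'' take_size_cat // drop_size_cat //.
  by rewrite -hwe -drop_nth ?cat_take_drop // sD'.
have hs'' : size w'' = n by rewrite /w'' size_cat size_take size_drop sD'; case: ifP; lia.
have hV'' : V w''.
  have [V1 V2] := VD'.
  split.
    rewrite /w'' nth_del /bump; case: (posnP e) => h0.
      rewrite h0 add1n; have := hmaxn 1; rewrite -hwe h0 V1; lia.
    rewrite leqNgt h0 /=; exact: V1.
  move=> t; rewrite /w'' !nth_del /bump.
  case: (leqP e t) => h1.
    have -> : (e <= t.+1) = true by lia.
    by rewrite !add1n; apply: V2.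
  case: (ltnP t.+1 e) => h2.
    rewrite /=; exact: V2.
  have h3 : nat_of_ord e = t.+1 by lia.
  rewrite /= add1n add0n.
  have := hmaxn t.+2; have := V2 t; rewrite -h3 hwe; lia.
have hiso : exists h : 'I_n -> 'I_n, bijective h /\
    forall i j : 'I_n, Prel w'' i j = Prel w (h i) (h j).
  have hlt : forall i : 'I_n, f' (lift e i) < n.
    move=> i; have := ltn_ord (f' (lift e i)); rewrite ltnS leq_eqVlt => /orP[/eqP hq|] //.
    exfalso; have : f' (lift e i) = f' e by rewrite he; apply: val_inj; exact: hq.
    by move/(bij_inj fb') => /eqP; rewrite eq_sym (negbTE (neq_lift e i)).
  pose g := fun i : 'I_n => Ordinal (hlt i).
  have gP : forall i j : 'I_n, Prel w'' i j = (x (g i) + 1 < x (g j))%R.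
    move=> i j; rewrite /= -hf' /Prel /w'' !nth_del /=.
    by rewrite bump_ltn.
  have ginj : injective g.
    move=> i j /(congr1 val) /= /val_inj /(bij_inj fb') /lift_inj //.
  case: fb => fi fK Kf.
  exists (fun i => fi (g i)); split.
    apply: injF_bij => i j /(can_inj Kf) /ginj //.
  by move=> i j; rewrite gP hf !Kf.
have hw'' : w'' = w.
  by case: hiso => h [hb hh]; exact: (area_unique hs'' sD hV'' VD hb hh).
split.
  by exists e => //; rewrite hins hw''.
move=> k hk hkw r.
have hlen : l <= n.
  rewrite -hwe; have := V_le VD' e; have := ltn_ord e; lia.
have hwl : forall v, v \in w -> v <= l.
  move=> v hv.
  have : v \in w'.
    rewrite hkw /insert_at mem_cat inE; move: hv; rewrite -{1}(cat_take_drop k w) mem_cat.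
    by case/orP => ->; rewrite ?orbT.
  by move/(nthP 0) => [t ht <-].
have hrunk : forall p, k <= p < n.+1 -> nth 0 (insert_at k l w) p = l ->
    forall q, k <= q <= p -> nth 0 (insert_at k l w) q = l.
  rewrite -hkw; move=> p /andP[hkp hpn] hp q /andP[hkq hqp].
  have heq : insert_at k l w = insert_at e l w by rewrite -hkw hins hw''.
  case: (leqP k e) => hke.
    case: (leqP q e) => hqe.
      rewrite hkw; apply: (ins_eq heq hke) => //; first by rewrite sD.
      by rewrite hkq hqe.
    apply: (hrun p) => //; apply/andP; split; lia.
  apply: (hrun p) => //; apply/andP; split; lia.
have := Z_main sD VD hwl hlen hk hrunk.
by rewrite -hkw.
Qed.
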